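(* Let $(S,d)$ be a finite metric space partitioned into two disjoint groups $S=S_1\cup S_2$, let $k_1,k_2$ be nonnegative integers with $k=k_1+k_2$, and let $r^*$ be the optimal radius of the fair $k$-center problem. Suppose the points arrive in a stream in which all points of $S_1$ arrive before all points of $S_2$, and let $\Gamma_1',\Gamma_2',\Gamma_{sub}$ be produced by Algorithm B (described in the context) with $\lambda=2r^*$. Then there is a subset $\Gamma_1''\subseteq\Gamma_1'$ all of whose elements have replacements, such that with $\Gamma'_{sub}=\{\sigma(c):c\in\Gamma_1''\}$ the set $C=\Gamma_2'\cup(\Gamma_1'\setminus\Gamma_1'')\cup\Gamma'_{sub}$ is a feasible solution of the fair $k$-center problem with $d(s,C)\le 3r^*$ for every $s\in S$.
   Context: Fair $k$-center: $C\subseteq S$ is feasible if $|C\cap S_l|\le k_l$ for $l=1,2$; cost $\max_{s\in S}d(s,C)$, $d(s,C)=\min_{c\in C}d(s,c)$, $d(s,\emptyset)=\infty$; $r^*$ is the minimum cost over feasible $C$. Algorithm B (parameter $\lambda=2r^*$): initialize $\Gamma_1'=\Gamma_2'=\Gamma_{sub}=\emptyset$. Upon each arriving $i\in S_1$: if $d(i,\Gamma_1')>\lambda$, add $i$ to $\Gamma_1'$. Upon each arriving $i\in S_2$: if $|\Gamma_1'|\le k_1$, then add $i$ to $\Gamma_2'$ iff $d(i,\Gamma_1')>3\lambda/2$ and $d(i,\Gamma_2')>\lambda$; otherwise ($|\Gamma_1'|>k_1$), add $i$ to $\Gamma_2'$ iff $d(i,\Gamma_1'\cup\Gamma_2')>\lambda$,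 and, in addition, if there is a point $j\in\Gamma_1'$ that has no replacement yet and satisfies $d(i,j)\le\lambda/2$, add $i$ to $\Gamma_{sub}$ and designate $i$ as the replacement $\sigma(j)$ of such a $j$. Output $\Gamma_1',\Gamma_2',\Gamma_{sub}$. *)

(* Defs.v *)
From HB Require Import structures.
From mathcomp Require Import all_boot all_order all_algebra.
Set Implicit Arguments. Unset Strict Implicit. Unset Printing Implicit Defensive.
Import Order.TTheory GRing.Theory Num.Theory.
Local Open Scope ring_scope.

Section FairKCenter.
Variables (R : realFieldType) (T : finType) (d : T -> T -> R).

Definition is_metric : Prop :=
  [/\ forall x y, 0 <= d x y,
      forall x y, d x y = 0 <-> x = y,
      forall x y, d x y = d y x &
      forall x y z, d x z <= d x y + d y z].

Definition fair_feasible (S1 S2 : {set T}) (k1 k2 : nat) (C : {set T}) : Prop :=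
  (#|C :&: S1| <= k1)%N /\ (#|C :&: S2| <= k2)%N.

(* cost(C) <= r, i.e. d(s,C) <= r for every s (d(s,emptyset) = +oo) *)
Definition covers (C : {set T}) (r : R) : Prop :=
  forall s : T, exists2 c, c \in C & d s c <= r.

Definition optimal_radius (S1 S2 : {set T}) (k1 k2 : nat) (r : R) : Prop :=
  (exists2 C, fair_feasible S1 S2 k1 k2 C & covers C r) /\
  (forall C r', fair_feasible S1 S2 k1 k2 C -> covers C r' -> r <= r').

(* d(i, G) > lam, with d(i, emptyset) = +oo *)
Definition far (i : T) (G : {set T}) (lam : R) : bool :=
  [forall c in G, lam < d i c].

Record stateB := StateB {
  G1 : {set T}; G2 : {set T}; Gsub : {set T}; sigma : T -> option T }.

Definition initB : stateB := StateB set0 set0 set0 (fun _ => None).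

(* One step of Algorithm B on arriving point i.  [ch i A] is the (arbitrary)
   choice of the point j of A which gets i as replacement, when several
   candidates exist. *)
Definition stepB (S1 : {set T}) (k1 : nat) (lam : R)
    (ch : T -> {set T} -> T) (st : stateB) (i : T) : stateB :=
  let: StateB g1 g2 gs sg := st in
  if i \in S1 then
    (if far i g1 lam then StateB (i |: g1) g2 gs sg else st)
  else if (#|g1| <= k1)%N then
    (if far i g1 (3 * lam / 2) && far i g2 lam
     then StateB g1 (i |: g2) gs sg else st)
  else
    let g2' := if far i (g1 :|: g2) lam then i |: g2 else g2 in
    let cand := [set j in g1 | (sg j == None) && (d i j <= lam / 2)] in
    if cand != set0 then
      let j := ch i cand in
      StateB g1 g2' (i |: gs) (fun x => if x == j then Some i else sg x)
    else StateB g1 g2' gs sg.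

Definition runB (S1 : {set T}) (k1 : nat) (lam : R)
    (ch : T -> {set T} -> T) (stream : seq T) : stateB :=
  foldl (stepB S1 k1 lam ch) initB stream.

End FairKCenter.

(* Main.v *)
Require Import Defs.
From HB Require Import structures.
From mathcomp Require Import all_boot all_order all_algebra.
From mathcomp Require Import lra zify.
Import Order.TTheory GRing.Theory Num.Theory.
Local Open Scope ring_scope.
Set Implicit Arguments. Unset Strict Implicit.
Lemma farP (R : realFieldType) (T : finType) (d : T -> T -> R) i (G : {set T}) lam :
  reflect (forall c, c \in G -> lam < d i c) (far d i G lam).
Proof. exact: forall_inP. Qed.

Lemma notfarP (R : realFieldType) (T : finType) (d : T -> T -> R) i (G : {set T}) lam :
  ~~ far d i G lam -> exists2 c, c \in G & d i c <= lam.
Proof. by move=> /forall_inPn [c cG]; rewrite -leNgt => H; exists c. Qed.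

Definition sep (R : realFieldType) (T : finType) (d : T -> T -> R) (G : {set T}) (lam : R) :=
  forall a b, a \in G -> b \in G -> a != b -> lam < d a b.

Definition inv1 (R : realFieldType) (T : finType) (d : T -> T -> R) (S1 : {set T}) (lam : R)
    (st : stateB T) (seen : seq T) :=
  [/\ G2 st = set0, forall x, sigma st x = None, G1 st \subset S1,
      sep d (G1 st) lam & forall x, x \in seen -> exists2 c, c \in G1 st & d x c <= lam].

Lemma phase1 (R : realFieldType) (T : finType) (d : T -> T -> R) (S1 : {set T}) k1 lam ch
    (s : seq T) st seen :
  is_metric d -> 0 <= lam -> {subset s <= S1} -> inv1 d S1 lam st seen ->
  inv1 d S1 lam (foldl (stepB d S1 k1 lam ch) st s) (seen ++ s).
Proof.
move=> [d0 dE dsym dtri] lam0.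
elim: s st seen => [|i s IH] st seen /= sS Hinv; first by rewrite cats0.
rewrite -cat_rcons; apply: IH; first by move=> x xs; apply: sS; rewrite inE xs orbT.
have iS : i \in S1 by apply: sS; rewrite inE eqxx.
case: st Hinv => g1 g2 gs sg [/= Hg2 Hsg Hg1 Hsep Hcov].
rewrite /stepB iS.
case: ifP => Hfar.
- split => //=.
  + by rewrite subUset sub1set iS.
  + move=> a b; rewrite !inE => /predU1P[->|aG] /predU1P[->|bG]; rewrite ?eqxx // => neq.
    * by move/farP: Hfar; apply.
    * by rewrite dsym; move/farP: Hfar; apply.
    * exact: Hsep neq.
  + move=> x; rewrite mem_rcons inE => /predU1P[->|xs].
    * by exists i; rewrite ?inE ?eqxx // ((dE i i).2 erefl).
    * by have [c cG dc] := Hcov x xs; exists c => //; rewrite inE cG orbT.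
- split => //= x; rewrite mem_rcons inE => /predU1P[->|xs]; last exact: Hcov.
  by apply: notfarP; rewrite Hfar.
Qed.

Definition invA (R : realFieldType) (T : finType) (d : T -> T -> R) (S2 : {set T}) (lam : R)
    (g1 : {set T}) (st : stateB T) (seen : seq T) :=
  [/\ G1 st = g1, G2 st \subset S2, sep d (G2 st) lam,
      forall p c, p \in G2 st -> c \in g1 -> 3 * lam / 2 < d p c &
      forall x, x \in seen -> (exists2 c, c \in g1 & d x c <= 3 * lam / 2) \/
                              (exists2 c, c \in G2 st & d x c <= lam)].

Lemma phaseA (R : realFieldType) (T : finType) (d : T -> T -> R) (S1 S2 : {set T}) k1 lam ch
    (s : seq T) st seen (g1 : {set T}) :
  is_metric d -> 0 <= lam -> (#|g1| <= k1)%N -> {subset s <= S2} -> [disjoint S1 & S2] ->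
  invA d S2 lam g1 st seen ->
  invA d S2 lam g1 (foldl (stepB d S1 k1 lam ch) st s) (seen ++ s).
Proof.
move=> [d0 dE dsym dtri] lam0 Hk + dis.
elim: s st seen => [|i s IH] st seen /= sS Hinv; first by rewrite cats0.
rewrite -cat_rcons; apply: IH; first by move=> x xs; apply: sS; rewrite inE xs orbT.
have iS : i \in S2 by apply: sS; rewrite inE eqxx.
have iS1 : (i \in S1) = false by apply: disjointFl dis iS.
case: st Hinv => g1' g2 gs sg [/= Eg1 Hg2 Hsep Hfar Hcov]; subst g1'.
rewrite /stepB iS1 Hk.
case: ifP => [/andP[F1 F2]|Hn].
- split => //=.
  + by rewrite subUset sub1set iS.
  + move=> a b; rewrite !inE => /predU1P[->|aG] /predU1P[->|bG]; rewrite ?eqxx // => neq.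
    * by move/farP: F2; apply.
    * by rewrite dsym; move/farP: F2; apply.
    * exact: Hsep neq.
  + move=> p c; rewrite !inE => /predU1P[->|pG] cG; last exact: Hfar.
    by move/farP: F1; apply.
  + move=> x; rewrite mem_rcons inE => /predU1P[->|xs].
    * by right; exists i; rewrite ?inE ?eqxx // ((dE i i).2 erefl).
    * case: (Hcov x xs) => [[c cG dc]|[c cG dc]]; first by left; exists c.
      by right; exists c => //; rewrite inE cG orbT.
- split => //= x; rewrite mem_rcons inE => /predU1P[->|xs]; last exact: Hcov.
  case F1: (far d i g1 (3 * lam / 2)) in Hn.
  + by right; apply: notfarP; move: Hn; rewrite /= => ->.
  + by left; apply: notfarP; rewrite F1.
Qed.

Definition invB (R : realFieldType) (T : finType) (d : T -> T -> R) (S2 : {set T}) (lam : R)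
    (g1 : {set T}) (st : stateB T) (seen : seq T) :=
  [/\ G1 st = g1, G2 st \subset S2, sep d (G2 st) lam,
      forall p c, p \in G2 st -> c \in g1 -> lam < d p c &
      forall j x, sigma st j = Some x -> x \in S2 /\ d x j <= lam / 2] /\
  ((forall x, x \in seen -> exists2 c, c \in g1 :|: G2 st & d x c <= lam) /\
   (forall x g, x \in seen -> g \in g1 -> d x g <= lam / 2 -> sigma st g != None)).

Lemma phaseB (R : realFieldType) (T : finType) (d : T -> T -> R) (S1 S2 : {set T}) k1 lam ch
    (s : seq T) st seen (g1 : {set T}) :
  is_metric d -> 0 <= lam -> (#|g1| <= k1)%N = false -> {subset s <= S2} -> [disjoint S1 & S2] ->
  sep d g1 lam -> (forall i (A : {set T}), A != set0 -> ch i A \in A) ->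
  invB d S2 lam g1 st seen ->
  invB d S2 lam g1 (foldl (stepB d S1 k1 lam ch) st s) (seen ++ s).
Proof.
move=> [d0 dE dsym dtri] lam0 Hk + dis Hsep1 Hch.
elim: s st seen => [|i s IH] st seen /= sS Hinv; first by rewrite cats0.
rewrite -cat_rcons; apply: IH; first by move=> x xs; apply: sS; rewrite inE xs orbT.
have iS : i \in S2 by apply: sS; rewrite inE eqxx.
have iS1 : (i \in S1) = false by apply: disjointFl dis iS.
case: st Hinv => g1' g2 gs sg [[/= Eg1 Hg2 Hsep Hfar Hsig] [/= Hcov Hrep]]; subst g1'.
rewrite /stepB iS1 Hk.
have [g2' [[Eg2' sub' HS' Hsep' Hfar'] [ci cig dci]]] : exists g2',
  [/\ (if far d i (g1 :|: g2) lam then i |: g2 else g2) = g2', g2 \subset g2',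
      g2' \subset S2, sep d g2' lam &
      (forall p c, p \in g2' -> c \in g1 -> lam < d p c)] /\
  exists2 c, c \in g1 :|: g2' & d i c <= lam.
  case: ifP => Hf.
  - exists (i |: g2); split; last by exists i; rewrite ?((dE i i).2 erefl) // !inE eqxx orbT.
    split => //.
    + by apply/subsetP => x xg; rewrite inE xg orbT.
    + by rewrite subUset sub1set iS.
    + move=> a b; rewrite !inE => /predU1P[->|aG] /predU1P[->|bG]; rewrite ?eqxx // => neq.
      * by move/farP: Hf; apply; rewrite inE bG orbT.
      * by rewrite dsym; move/farP: Hf; apply; rewrite inE aG orbT.
      * exact: Hsep neq.
    + move=> p c; rewrite !inE => /predU1P[->|pG] cG; last exact: Hfar.
      by move/farP: Hf; apply; rewrite inE cG.
  - exists g2; split; first by split.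
    by apply: notfarP; rewrite Hf.
rewrite Eg2'.
suff Hgen : forall gs' sg', (forall j x, sg' j = Some x -> x \in S2 /\ d x j <= lam/2) ->
    (forall g, sg g != None -> sg' g != None) ->
    (forall g, g \in g1 -> d i g <= lam/2 -> sg' g != None) ->
    invB d S2 lam g1 (StateB g1 g2' gs' sg') (rcons seen i).
  set cand := [set j in g1 | _].
  case: ifP => Hc; apply: Hgen => //.
  - move=> j x; case: eqP => [-> [<-]|_ /Hsig //].
    have := Hch i _ Hc; rewrite inE => /andP[_ /andP[_ H]]; by split.
  - by move=> g Hg; case: (g =P ch i cand).
  - move=> g gG dg; case: (g =P ch i cand) => // ng.
    case: (eqVneq (sg g) None) => // Hn; exfalso.
    have := Hch i _ Hc; rewrite inE => /andP[jG /andP[_ dj]].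
    have := Hsep1 _ _ jG gG; rewrite eq_sym; move/eqP: ng => ng.
    move=> /(_ ng); rewrite ltNge; apply/negP/negPn.
    by apply: le_trans (dtri _ i _) _; rewrite dsym; lra.
  - move=> g gG dg; case: (eqVneq (sg g) None) => // Hn.
    move/negbT: Hc; rewrite negbK => /eqP Hc; have : g \in cand by rewrite inE gG Hn eqxx dg.
    by rewrite Hc inE.
move=> gs' sg' Hs1 Hs2 Hs3; split; first by split.
split => /= x; [|move=> g]; rewrite mem_rcons in_cons => /predU1P[->|xs].
- by exists ci.
- have [c cG dc] := Hcov x xs; exists c => //; move: cG; rewrite !inE.
  by case/orP => [->//|/(subsetP sub') ->]; rewrite orbT.
- exact: Hs3.
- by move=> xg dg; apply: Hs2; apply: Hrep xs xg dg.
Qed.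

Unset Implicit Arguments. Set Strict Implicit.
Theorem mainTheorem9 (R : realFieldType) (T : finType) (d : T -> T -> R)
    (S1 S2 : {set T}) (k1 k2 : nat) (rstar : R)
    (s1 s2 : seq T) (ch : T -> {set T} -> T) :
  is_metric d ->
  [disjoint S1 & S2] -> S1 :|: S2 = [set: T] ->
  optimal_radius d S1 S2 k1 k2 rstar ->
  (* the stream: all points of S1 (in s1) arrive before all points of S2 (in s2) *)
  uniq (s1 ++ s2) -> (forall x, x \in s1 ++ s2) ->
  {subset s1 <= S1} -> {subset s2 <= S2} ->
  (* ch picks one of the candidates whenever there is one *)
  (forall i (A : {set T}), A != set0 -> ch i A \in A) ->
  let st := runB d S1 k1 (2 * rstar) ch (s1 ++ s2) in
  exists G1'' : {set T},
    [/\ G1'' \subset G1 st,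
        (forall c, c \in G1'' -> sigma st c != None) &
        let Gsub' := [set x | [exists c in G1'', sigma st c == Some x]] in
        let C := G2 st :|: (G1 st :\: G1'') :|: Gsub' in
        fair_feasible S1 S2 k1 k2 C /\
        (forall s, exists2 c, c \in C & d s c <= 3 * rstar)].
Proof.
move=> hm dis cover [[Cs [Cf1 Cf2] Ccov] _] Huniq Hall s1S1 s2S2 Hch st.
have [x0 _ | T0] := pickP (@predT T); last first.
  have cT : forall A : {set T}, #|A| = 0%N.
    by move=> A; apply: eq_card0 => x; move: (T0 x).
  exists set0; split; rewrite ?sub0set //; first by move=> c; rewrite inE.
  move=> Gsub' C; split; first by split; rewrite cT.
  by move=> s; move: (T0 s).
have [d0 dE dsym dtri] := hm.
have r0 : 0 <= rstar by have [c _ dc] := Ccov x0; apply: le_trans dc.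
set lam := 2 * rstar.
have lam0 : 0 <= lam by rewrite /lam; lra.
have inS1 : forall x, x \in S1 -> x \in s1.
  move=> x xS; move: (Hall x); rewrite mem_cat => /orP[//|/s2S2 xS2].
  by rewrite (disjointFr dis xS) in xS2.
have inS2 : forall x, x \in S2 -> x \in s2.
  move=> x xS; move: (Hall x); rewrite mem_cat => /orP[/s1S1 xS1|//].
  by rewrite (disjointFl dis xS) in xS1.
have S12 : forall x, (x \in S1) || (x \in S2).
  by move=> x; rewrite -in_setU cover inE.
set F := fun x => odflt x [pick c in Cs | d x c <= rstar].
have HF : forall x, F x \in Cs /\ d x (F x) <= rstar.
  move=> x; rewrite /F; case: pickP => [c /andP[]|H] //=.
  by have [c cC dc] := Ccov x; move: (H c); rewrite cC dc.
have Finj : forall G : {set T}, sep d G lam -> {in G &, injective F}.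
  move=> G Hs a b aG bG E; case: (eqVneq a b) => // neq.
  have := Hs a b aG bG neq; rewrite ltNge => /negP; case.
  have [_ h1] := HF a; have [_ h2] := HF b.
  apply: le_trans (dtri a (F a) b) _; rewrite E (dsym _ b) in h1 *; rewrite /lam; lra.
set st1 := foldl (stepB d S1 k1 lam ch) (initB T) s1.
have Est : st = foldl (stepB d S1 k1 lam ch) st1 s2 by rewrite /st /runB foldl_cat.
have [H1g2 H1sg H1S H1sep H1cov] : inv1 d S1 lam st1 ([::] ++ s1).
  apply: phase1 => //; split => //=; first exact: sub0set; by move=> a b; rewrite inE.
set g1 := G1 st1.
case: (boolP (#|g1| <= k1)%N) => Hk.
  have [A1 A2 A3 A4 A5] : invA d S2 lam g1 st ([::] ++ s2).
    rewrite Est; apply: phaseA => //; split => //; rewrite ?H1g2 //=.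
    - exact: sub0set.
    - by move=> a b; rewrite inE.
    - by move=> p c; rewrite inE.
  exists set0.
  have Gs0 : [set x | [exists c in set0, sigma st c == Some x]] = set0 :> {set T}.
    by apply/setP => x; rewrite !inE; apply/exists_inP => -[c]; rewrite inE.
  split; [exact: sub0set | by move=> c; rewrite inE |].
  move=> Gsub' C; rewrite /C /Gsub' Gs0 setD0 setU0 A1.
  split; first split.
  - apply: leq_trans (subset_leq_card _) Hk; apply/subsetP => x.
    rewrite in_setI in_setU => /andP[/orP[xG2|xg1] xS1] //.
    by rewrite (disjointFl dis (subsetP A2 _ xG2)) in xS1.
  - apply: leq_trans Cf2.
    apply: (@leq_trans #|G2 st|).
      apply: subset_leq_card; apply/subsetP => x.
      rewrite in_setI in_setU => /andP[/orP[xG2|xg1] xS2] //.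
      by rewrite (disjointFr dis (subsetP H1S _ xg1)) in xS2.
    rewrite -(card_in_imset (Finj _ A3)); apply: subset_leq_card.
    apply/subsetP => y /imsetP [p pG ->]; rewrite in_setI (HF p).1 /=.
    case/orP: (S12 (F p)) => // FS1; exfalso.
    have [c cg dc] := H1cov _ (inS1 _ FS1).
    have := A4 p c pG cg; rewrite ltNge => /negP; apply.
    have [_ h] := HF p.
    apply: le_trans (dtri p (F p) c) _; rewrite /lam in dc *; lra.
  - move=> s; move: (Hall s); rewrite mem_cat => /orP[ss1|ss2].
      have [c cg dc] := H1cov _ ss1; exists c; first by rewrite in_setU cg orbT.
      by rewrite /lam in dc; lra.
    case: (A5 _ ss2) => [[c cg dc]|[c cg dc]]; exists c; rewrite ?in_setU ?cg ?orbT //.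
    + by rewrite /lam in dc; lra.
    + by rewrite /lam in dc; lra.
have Hk' : (#|g1| <= k1)%N = false by apply: negbTE.
have [[B1 B2 B3 B4 B5] [B6 B7]] : invB d S2 lam g1 st ([::] ++ s2).
  rewrite Est; apply: phaseB => //; split; split => //=; rewrite ?H1g2 //=.
  - exact: sub0set.
  - by move=> a b; rewrite inE.
  - by move=> p c; rewrite inE.
  - by move=> j x; rewrite H1sg.
set B := [set g in g1 | F g \in S2].
have Bg1 : B \subset g1 by apply/subsetP => x; rewrite inE => /andP[].
have BR : forall g, g \in B -> sigma st g != None.
  move=> g; rewrite inE => /andP[gg FS]; apply: (B7 (F g)) => //; first exact: inS2.
  by rewrite dsym; have := (HF g).2; rewrite /lam; lra.
have cardD : (#|g1 :\: B| <= k1)%N.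
  apply: leq_trans Cf1.
  have inj : {in g1 :\: B &, injective F}.
    by move=> a b /setDP[ag _] /setDP[bg _]; apply: (Finj _ H1sep).
  rewrite -(card_in_imset inj); apply: subset_leq_card.
  apply/subsetP => y /imsetP [g /setDP[gg gB] ->]; rewrite in_setI (HF g).1 /=.
  case/orP: (S12 (F g)) => // FS2; exfalso.
  by move: gB; rewrite inE gg FS2.
have cardB : (#|g1| <= #|B| + k1)%N.
  have := cardsID B g1; rewrite (setIidPr Bg1); lia.
set n := (#|g1| - k1)%N.
set G1'' := [set x in take n (enum B)].
have G1B : G1'' \subset B.
  by apply/subsetP => x; rewrite inE => /mem_take; rewrite mem_enum.
have cardG : #|G1''| = n.
  rewrite cardsE (card_uniqP _) ?take_uniq ?enum_uniq // size_takel // -cardE; lia.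
have G1g1 : G1'' \subset g1 by apply: subset_trans G1B Bg1.
exists G1''; split.
- by rewrite B1.
- by move=> c /(subsetP G1B) /BR.
move=> Gsub' C.
have GsubP : forall x, x \in Gsub' -> exists2 c, c \in G1'' & sigma st c = Some x.
  by move=> x; rewrite inE => /exists_inP [c cG /eqP E]; exists c.
have GsubS2 : forall x, x \in Gsub' -> x \in S2.
  by move=> x /GsubP [c _ /B5 []].
split; first split.
- apply: (@leq_trans #|g1 :\: G1''|).
    apply: subset_leq_card; apply/subsetP => x.
    rewrite in_setI !in_setU B1 => /andP[/orP[/orP[xG2|xD]|xGs] xS1] //.
      by rewrite (disjointFl dis (subsetP B2 _ xG2)) in xS1.
    by rewrite (disjointFl dis (GsubS2 _ xGs)) in xS1.
  rewrite cardsD (setIidPr G1g1) cardG /n; lia.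
- have cGs : (#|Gsub'| <= #|G1''|)%N.
    apply: leq_trans (leq_imset_card (fun c => odflt c (sigma st c)) G1'').
    apply: subset_leq_card; apply/subsetP => x /GsubP [c cG E].
    by apply/imsetP; exists c => //; rewrite E.
  have sepU : sep d (g1 :|: G2 st) lam.
    move=> a b; rewrite !in_setU => /orP[ag|aG] /orP[bg|bG] neq.
    + exact: H1sep.
    + by rewrite dsym; apply: B4.
    + exact: B4.
    + exact: B3.
  have cU : (#|g1 :|: G2 st| <= #|Cs|)%N.
    rewrite -(card_in_imset (Finj _ sepU)); apply: subset_leq_card.
    by apply/subsetP => y /imsetP [p _ ->]; rewrite (HF p).1.
  have cI : g1 :&: G2 st = set0.
    apply/setP => x; rewrite !inE; apply/andP => -[xg xG].
    by have := subsetP H1S _ xg; rewrite (disjointFl dis (subsetP B2 _ xG)).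
  have cU2 : #|g1 :|: G2 st| = (#|g1| + #|G2 st|)%N by rewrite cardsU cI cards0 subn0.
  have cCs : (#|Cs| <= #|Cs :&: S1| + #|Cs :&: S2|)%N.
    have E : Cs = (Cs :&: S1) :|: (Cs :&: S2) by rewrite -setIUr cover setIT.
    by rewrite {1}E cardsU leq_subr.
  have cC2 : (#|C :&: S2| <= #|G2 st| + #|Gsub'|)%N.
    apply: (@leq_trans #|G2 st :|: Gsub'|); last by rewrite cardsU leq_subr.
    apply: subset_leq_card; apply/subsetP => x.
    rewrite in_setI !in_setU B1 => /andP[/orP[/orP[xG2|/setDP[xg _]]|xGs] xS2];
      rewrite ?xG2 ?xGs ?orbT //.
    by rewrite (disjointFr dis (subsetP H1S _ xg)) in xS2.
  rewrite /n in cardG; lia.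
- move=> s.
  have key : forall c, c \in g1 -> d s c <= lam -> exists2 c', c' \in C & d s c' <= 3 * rstar.
    move=> c cg dc; case: (boolP (c \in G1'')) => cG.
      have := BR c (subsetP G1B c cG); case E: (sigma st c) => [x|] // _.
      exists x.
        rewrite /C in_setU; apply/orP; right; rewrite inE; apply/exists_inP.
        by exists c => //; rewrite E.
      have [_ dx] := B5 c x E.
      apply: le_trans (dtri s c x) _; rewrite (dsym c x); rewrite /lam in dc dx; lra.
    exists c; first by rewrite /C !in_setU in_setD B1 cG cg orbT.
    by rewrite /lam in dc; lra.
  move: (Hall s); rewrite mem_cat => /orP[ss1|ss2].
    by have [c cg dc] := H1cov _ ss1; apply: key cg dc.
  have [c] := B6 _ ss2; rewrite in_setU => /orP[cg|cG] dc; first exact: key cg dc.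
  exists c; first by rewrite /C !in_setU cG.
  by rewrite /lam in dc; lra.
Qed.
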